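(* There is some real $\alpha>1/2$ and an open subset $U\subseteq\mathbb{C}$ such that $\mathcal{M}\cap U$ is equal to the interval $[1/2,\alpha)$.
   Context: For $z\in\mathbb{D}^*=\{0<|z|<1\}$, $f(x)=zx$, $g(x)=z(x-1)+1$, $\Lambda_z$ is the unique nonempty compact subset of $\mathbb{C}$ with $\Lambda_z=f(\Lambda_z)\cup g(\Lambda_z)$, and $\mathcal{M}=\{z\in\mathbb{D}^*:\Lambda_z\text{ connected}\}$. *)

(* Defs.v *)
From HB Require Import structures.
From mathcomp Require Import all_boot all_order all_algebra.
From mathcomp Require Import all_classical all_reals all_analysis.
From mathcomp Require Import complex.
Set Implicit Arguments. Unset Strict Implicit. Unset Printing Implicit Defensive.
Import Order.TTheory GRing.Theory Num.Theory ComplexField.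
Import numFieldNormedType.Exports.
Local Open Scope classical_set_scope.
Local Open Scope ring_scope.

HB.instance Definition _ (R : realType) :=
  PseudoPointedMetric.copy R[i] (R[i])^o.

Definition punct_disc (R : realType) : set R[i] :=
  [set z | 0 < `|z| < 1].

Definition fz (R : realType) (z : R[i]) (x : R[i]) : R[i] := z * x.
Definition gz (R : realType) (z : R[i]) (x : R[i]) : R[i] := z * (x - 1) + 1.

Definition is_attractor (R : realType) (z : R[i]) (L : set R[i]) : Prop :=
  L !=set0 /\ compact L /\ L = fz z @` L `|` gz z @` L.

(* M = { z in D^* : Lambda_z connected }; Lambda_z is the unique
   attractor, so we quantify over the (unique) attractor. *)
Definition Mset (R : realType) : set R[i] :=
  [set z | punct_disc z /\ exists L, is_attractor z L /\ connected L].

(* Main.v *)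
Require Import Defs.
From HB Require Import structures.
From mathcomp Require Import all_boot all_order all_algebra.
From mathcomp Require Import all_classical all_reals all_analysis.
From mathcomp Require Import complex.
From mathcomp Require Import ring lra.
Import Order.TTheory GRing.Theory Num.Theory ComplexField.
Import numFieldNormedType.Exports.
Local Open Scope classical_set_scope.
Local Open Scope ring_scope.
Section S.
Local Open Scope complex_scope.
Variable R : realType.
Implicit Types a b z : R[i].

Definition nc z : R := Num.sqrt (complex.Re z ^+ 2 + complex.Im z ^+ 2).

Lemma normC_nc z : `|z| = (nc z)%:C.
Proof. exact: normc_def. Qed.

Lemma nc_ge0 z : 0 <= nc z.
Proof. exact: sqrtr_ge0. Qed.

Lemma ncM a b : nc (a * b) = nc a * nc b.
Proof. apply: (@complexI R). by rewrite rmorphM /= -!normC_nc normrM. Qed.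

Lemma ncD a b : nc (a + b) <= nc a + nc b.
Proof. by rewrite -lecR rmorphD /= -!normC_nc ler_normD. Qed.

Lemma ncN a : nc (- a) = nc a.
Proof. apply: (@complexI R). by rewrite -!normC_nc normrN. Qed.

Lemma ncB a b : nc (a - b) = nc (b - a).
Proof. by rewrite -ncN opprB. Qed.

Lemma ncR (x : R) : nc x%:C = `|x|.
Proof. by rewrite /nc /= expr0n /= addr0 sqrtr_sqr. Qed.

Lemma Re_le_nc z : `|complex.Re z| <= nc z.
Proof.
rewrite /nc -sqrtr_sqr; apply: ler_wsqrtr.
by rewrite lerDl sqr_ge0.
Qed.

Lemma Im_le_nc z : `|complex.Im z| <= nc z.
Proof.
rewrite /nc -sqrtr_sqr; apply: ler_wsqrtr.
by rewrite lerDr sqr_ge0.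
Qed.

Lemma ltC_nc z (e : R[i]) : 0 < e -> nc z < complex.Re e -> `|z| < e.
Proof.
move=> e0 h; rewrite normC_nc; move: e0; rewrite !ltcE /= => /andP[/eqP e0 _].
by rewrite e0 eqxx h.
Qed.

Lemma ballC (x y : R[i]) e : ball x e y = (`|x - y| < e).
Proof. by []. Qed.

Lemma hausC : hausdorff_space R[i].
Proof. exact: (@norm_hausdorff _ (R[i]^o)). Qed.

Lemma cont_realC : continuous (fun t : R => t%:C : R[i]).
Proof.
move=> x; apply/cvg_ballP => e e0.
have e0' : 0 < complex.Re e by move: e0; rewrite ltcE => /andP[].
apply/nbhs_ballP; exists (complex.Re e) => // t /= hb.
rewrite ballC -rmorphB; apply: ltC_nc => //.
by rewrite ncR.
Qed.

Lemma cont_toR (f : R[i] -> R) : (forall a b, `|f a - f b| <= nc (a - b)) ->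
  continuous f.
Proof.
move=> hf x; apply/(@cvg_ballP _ _ _ _ (@nbhs_filter _ x)) => e e0.
have e0' : 0 < e%:C by rewrite ltcR.
exists e%:C => // t /=; rewrite normC_nc ltcR => h.
exact: (le_lt_trans (hf _ _)).
Qed.

Lemma cont_aff (c d : R[i]) : continuous (fun a : R[i] => c * a + d).
Proof.
move=> x; apply/(@cvg_ballP _ _ _ _ (@nbhs_filter _ x)) => e e0.
have e0' : 0 < complex.Re e by move: e0; rewrite ltcE => /andP[].
have k0 : 0 < nc c + 1 by rewrite ltr_wpDl ?nc_ge0.
have ek : 0 < (complex.Re e / (nc c + 1))%:C by rewrite ltcR divr_gt0.
exists (complex.Re e / (nc c + 1))%:C => // t /=.
rewrite normC_nc ltcR => h; apply: ltC_nc => //.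
have -> : c * x + d - (c * t + d) = c * (x - t) by ring.
rewrite ncM.
rewrite ltr_pdivlMr // in h.
apply: (le_lt_trans _ h).
rewrite mulrDr mulr1 mulrC lerDl; exact: nc_ge0.
Qed.


Lemma fz_aff z : fz z = (fun a => z * a + 0).
Proof. by apply: funext => a; rewrite /fz addr0. Qed.
Lemma gz_aff z : gz z = (fun a => z * a + (1 - z)).
Proof. by apply: funext => a; rewrite /gz; ring. Qed.

Lemma cont_fz z : continuous (fz z).
Proof. rewrite fz_aff; exact: cont_aff. Qed.
Lemma cont_gz z : continuous (gz z).
Proof. rewrite gz_aff; exact: cont_aff. Qed.

Lemma conn_inter z L : is_attractor z L -> connected L ->
  exists a b, L a /\ L b /\ z * a = z * (b - 1) + 1.
Proof.
move=> [[l0 Ll0] [cL eL]] conL.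
set A := fz z @` L; set B := gz z @` L.
have cA : closed A.
  apply: compact_closed; first exact: hausC.
  apply: continuous_compact => //; apply: continuous_subspaceT; exact: cont_fz.
have cB : closed B.
  apply: compact_closed; first exact: hausC.
  apply: continuous_compact => //; apply: continuous_subspaceT; exact: cont_gz.
apply: contrapT => hno.
have disj : forall w, A w -> B w -> False.
  move=> w [a La <-] [b Lb hb]; apply: hno; exists a, b.
  split; first exact: La. split; first exact: Lb.
  by move: hb; rewrite /fz /gz => ->.
have AL : A = L.
  apply: conL.
  - by exists (fz z l0); exists l0.
  - exists (~` B); first exact: closed_openC.
    apply/seteqP; split => w.
    + move=> Aw; split; first by rewrite eL; left.
      by move=> Bw; exact: (disj w).
    + by move=> [Lw nB]; move: Lw; rewrite eL => -[//|].
  - exists A => //; apply/seteqP; split => w.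
    + by move=> Aw; split => //; rewrite eL; left.
    + by move=> [].
have Bw : B (gz z l0) by exists l0.
apply: (disj (gz z l0)) => //.
by rewrite AL eL; right.
Qed.


Definition seg : set R[i] := [set t%:C | t in `[0, 1]].

Lemma seg_mem (t : R) : 0 <= t <= 1 -> seg t%:C.
Proof. by move=> h; exists t => //=; rewrite in_itv. Qed.

Lemma real_in_M (x : R) : 1/2 <= x < 1 -> Mset x%:C.
Proof.
move=> /andP[hx1 hx2].
have x0 : 0 < x by apply: lt_le_trans hx1; rewrite divr_gt0.
split.
  rewrite /punct_disc /= normC_nc ncR !ltcE /= eqxx /=.
  by rewrite gtr0_norm // x0 hx2.
exists seg; split; last first.
  apply: connected_continuous_connected.
    by apply/connected_intervalP; exact: interval_is_interval.
  apply: continuous_subspaceT; exact: cont_realC.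
split; first by exists 0%:C; apply: seg_mem; rewrite lexx ler01.
split.
  apply: continuous_compact; last exact: segment_compact.
  apply: continuous_subspaceT; exact: cont_realC.
apply/seteqP; split => w.
- move=> [t /=]; rewrite in_itv /= => /andP[t0 t1] <-.
  have [tx|xt] := leP t x.
  + left; exists (t / x)%:C.
      apply: seg_mem; rewrite divr_ge0 ?(ltW x0) //=.
      by rewrite ler_pdivrMr // mul1r.
    by rewrite /fz -rmorphM /= mulrC divfK // gt_eqF.
  + right; exists ((t - 1 + x) / x)%:C.
      apply: seg_mem; apply/andP; split.
        apply: divr_ge0; last exact: ltW.
        lra.
      rewrite ler_pdivrMr // mul1r; lra.
    rewrite /gz -rmorphB -rmorphM -rmorphD /=; congr (_%:C).
    by field; rewrite gt_eqF.
- move=> [] [t0 [t /=]]; rewrite in_itv /= => /andP[t1 t2] <- <-.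
  + rewrite /fz -rmorphM; apply: seg_mem.
    rewrite mulr_ge0 ?(ltW x0) //=.
    rewrite -(mulr1 1) ler_pM // ltW //.
  + rewrite /gz -rmorphB -rmorphM -rmorphD; apply: seg_mem.
    apply/andP; split; nra.
Qed.


Lemma halfC : (1 / 2 : R[i]) = (1 / 2 : R)%:C.
Proof. by rewrite rmorphM rmorph1 fmorphV /= rmorphD rmorph1. Qed.

Lemma nc_lip a b : `|nc a - nc b| <= nc (a - b).
Proof.
have h1 : nc a <= nc (a - b) + nc b by rewrite -{1}(subrK b a) ncD.
have h2 : nc b <= nc (b - a) + nc a by rewrite -{1}(subrK a b) ncD.
rewrite ncB in h2.
rewrite ler_norml; apply/andP; split; lra.
Qed.

Lemma ReB a b : complex.Re (a - b) = complex.Re a - complex.Re b.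
Proof. by case: a; case: b. Qed.
Lemma ImB a b : complex.Im (a - b) = complex.Im a - complex.Im b.
Proof. by case: a; case: b. Qed.
Lemma ImM a b : complex.Im (a * b) =
  complex.Re a * complex.Im b + complex.Im a * complex.Re b.
Proof. by case: a => ? ?; case: b => ? ? /=; ring. Qed.
Lemma ReM a b : complex.Re (a * b) =
  complex.Re a * complex.Re b - complex.Im a * complex.Im b.
Proof. by case: a => ? ?; case: b => ? ? /=; ring. Qed.

Lemma Im_lip a b : `| `|complex.Im a| - `|complex.Im b| | <= nc (a - b).
Proof.
apply: le_trans (Im_le_nc _); rewrite ImB; exact: ler_dist_dist.
Qed.

Lemma nc_half w : nc (w / 2) = nc w / 2.
Proof.
have -> : w / 2 = (1 / 2) * w by rewrite mulrC mul1r.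
rewrite halfC ncM ncR ger0_norm; last by rewrite divr_ge0.
by rewrite mulrC mul1r.
Qed.

Lemma L_decomp z L a : is_attractor z L -> L a ->
  exists a', L a' /\ (a = z * a' \/ a = z * (a' - 1) + 1).
Proof.
move=> [_ [_ eL]] La; have : (fz z @` L `|` gz z @` L) a by rewrite -eL.
case=> -[a' La' <-]; exists a'; split => //.
  by left.
by right.
Qed.

Lemma cont_dist (c : R[i]) : continuous (fun a => nc (a - c)).
Proof.
apply: cont_toR => a b; have := nc_lip (a - c) (b - c).
by have -> : a - c - (b - c) = a - b by ring.
Qed.

Lemma cont_absIm : continuous (fun a : R[i] => `|complex.Im a|).
Proof. apply: cont_toR => a b; exact: Im_lip. Qed.

Lemma bound_m z L : is_attractor z L ->
  exists m, 0 <= m /\ (forall a, L a -> nc (a - 1/2) <= m) /\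
     m <= nc z * m + nc (1 - z) / 2.
Proof.
move=> hL; have [L0 [cL _]] := hL.
have [a0 /set_mem La0 ha0] := @compact_EVT_max _ _ (fun a => nc (a - 1/2)) L L0 cL
  (@continuous_subspaceT _ _ L _ (cont_dist (1/2))).
exists (nc (a0 - 1/2)); split; first exact: nc_ge0.
have hm : forall a, L a -> nc (a - 1/2) <= nc (a0 - 1/2).
  by move=> a La; apply: ha0; apply: mem_set.
split => //.
have [a' [La' [e|e]]] := L_decomp _ _ _ hL La0; rewrite {1}e.
- have -> : z * a' - 1/2 = z * (a' - 1/2) + (- ((1 - z) / 2)) by ring.
  apply: le_trans (ncD _ _) _; rewrite ncM ncN nc_half.
  rewrite lerD2r; apply: ler_wpM2l; [exact: nc_ge0 | exact: hm].
- have -> : z * (a' - 1) + 1 - 1/2 = z * (a' - 1/2) + (1 - z) / 2.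
 by field.
  apply: le_trans (ncD _ _) _; rewrite ncM nc_half.
  rewrite lerD2r; apply: ler_wpM2l; [exact: nc_ge0 | exact: hm].
Qed.

Lemma bound_M z L m : is_attractor z L -> (forall a, L a -> nc (a - 1/2) <= m) ->
  exists M : R, (0 <= M) /\ (forall a, L a -> `|complex.Im a| <= M) /\
     M <= `|complex.Re z| * M + `|complex.Im z| * (m + 1/2).
Proof.
move=> hL hm; have [L0 [cL _]] := hL.
have [a0 /set_mem La0 ha0] := @compact_EVT_max _ _ (fun a => `|complex.Im a|) L L0 cL
  (@continuous_subspaceT _ _ L _ cont_absIm).
exists (`|complex.Im a0|); split => //.
have hM : forall a, L a -> `|complex.Im a| <= `|complex.Im a0|.
  by move=> a La; apply: ha0; apply: mem_set.
split => //.
have hRe : forall a, L a -> `|complex.Re a| <= m + 1/2.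
  move=> a La; have := le_trans (Re_le_nc _) (hm a La).
  rewrite halfC ReB /= => h.
  have -> : complex.Re a = (complex.Re a - 1/2) + 1/2 by ring.
  apply: le_trans (ler_normD _ _) _; apply: lerD => //.
  by rewrite ger0_norm // divr_ge0.
have hRe1 : forall a, L a -> `|complex.Re a - 1| <= m + 1/2.
  move=> a La; have := le_trans (Re_le_nc _) (hm a La).
  rewrite halfC ReB /= => h.
  have -> : complex.Re a - 1 = (complex.Re a - 1/2) + (- (1/2)) by field.
  apply: le_trans (ler_normD _ _) _; apply: lerD => //.
  by rewrite normrN ger0_norm // divr_ge0.
have [a' [La' [e|e]]] := L_decomp _ _ _ hL La0; rewrite {1}e.
- rewrite ImM; apply: le_trans (ler_normD _ _) _; rewrite !normrM.
  apply: lerD; first by rewrite ler_wpM2l ?hM.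
  by rewrite ler_wpM2l ?hRe.
- have -> : complex.Im (z * (a' - 1) + 1) = complex.Im (z * (a' - 1)).
    by case: (z * (a' - 1)) => ? ? /=; rewrite addr0.
  rewrite ImM ImB ReB /= subr0.
  apply: le_trans (ler_normD _ _) _; rewrite !normrM.
  apply: lerD; first by rewrite ler_wpM2l ?hM.
  by rewrite ler_wpM2l ?hRe1.
Qed.

Lemma arith_gf (x y u v m M : R) :
  `|x - 1/2| < 1/100 -> `|y| < 1/100 -> y != 0 -> 0 <= m -> m <= 13/24 ->
  0 <= M -> M <= `|x| * M + `|y| * (m + 1/2) -> `|v| <= 2 * M ->
  (x^+2 - y^+2) * u - 2 * x * y * v = (1 - x)^+2 - y^+2 ->
  (x^+2 - y^+2) * v + 2 * x * y * u = - 2 * (1 - x) * y -> False.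
Proof.
move=> hx hy y0 m0 m1 M0 hM hv E1 E2.
have [x1 x2] : 49/100 < x /\ x < 51/100.
  by move: hx; rewrite ltr_norml => /andP[]; split; lra.
rewrite (gtr0_norm (_ : 0 < x)) in hM; last by clear -x1; lra.
have ay0 : 0 < `|y| by rewrite normr_gt0.
set ay := `|y| in hy hM ay0.
have h1 : M * (49/100) <= M * (1 - x) by apply: ler_wpM2l => //; clear -x2; lra.
have h2 : ay * (m + 1/2) <= ay * (25/24).
  by apply: ler_wpM2l; [exact: ltW | clear -m1; lra].
have HM : M <= 213/100 * ay by clear -h1 h2 hM M0 ay0; lra.
have hv' : `|v| <= 426/100 * ay by clear -hv HM; lra.
have ay2 : ay * ay <= (1/100) * (1/100) by apply: ler_pM; [exact: ltW|exact: ltW|exact: ltW|exact: ltW].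
have hy2 : y ^+ 2 = ay * ay by rewrite -expr2 /ay real_normK ?num_real.
have x0 : 0 <= x by clear -x1; lra.
have xx1 : x * x <= 51/100 * (51/100) by apply: ler_pM; [exact: x0|exact: x0|exact: ltW x2|exact: ltW x2].
have xx2 : 49/100 * (49/100) <= x * x by apply: ler_pM; [clear; lra|clear; lra|exact: ltW x1|exact: ltW x1].
have hxy1 : 24/100 <= x^+2 - y^+2 by rewrite hy2 expr2; clear -xx2 ay2; lra.
have hxy2 : x^+2 - y^+2 <= 2601/10000.
  by rewrite hy2 expr2; have := mulr_ge0 (ltW ay0) (ltW ay0); clear -xx1; lra.
have hyv : `|2 * x * y * v| <= 1/1000.
  rewrite !normrM (gtr0_norm (_ : 0 < x)); last by clear -x1; lra.
  rewrite -/ay (ger0_norm (_ : 0 <= 2)) //.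
  have w1 : `|v| <= 426/10000 by clear -hv' hy; lra.
  have xa : x * ay <= 51/100 * (1/100) by apply: ler_pM => //; exact: ltW.
  have xa0 : 0 <= x * ay by apply: mulr_ge0 => //; exact: ltW.
  have : x * ay * `|v| <= 51/100 * (1/100) * (426/10000) by apply: ler_pM.
  clear -xa0; lra.
move: hyv; rewrite ler_norml => /andP[w1 _].
set P := x^+2 - y^+2 in E1 E2 hxy1 hxy2.
have ox : 49/100 * (49/100) <= (1 - x) * (1 - x).
  by apply: ler_pM; [clear; lra|clear; lra|clear -x2; lra|clear -x2; lra].
have E1' : P * u = (1 - x) * (1 - x) - ay * ay + 2 * x * y * v.
  by rewrite -hy2 -E1; ring.
have hu : 9/10 <= u.
  rewrite leNgt; apply/negP => hu.
  have : P * u <= P * (9/10) by apply: ler_wpM2l; [clear -hxy1; lra| exact: ltW].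
  clear -E1' ox ay2 w1 hxy2; lra.
have Q0 : 49/100 * (9/10) <= x * u.
  by apply: ler_pM; [clear; lra|clear; lra|exact: ltW x1|exact: hu].
have E2' : P * v = - (2 * y * (x * u + (1 - x))) by rewrite -[LHS]addr0 -(subrr (2 * x * y * u)) addrA E2; ring.
have N : P * `|v| = 2 * ay * (x * u + (1 - x)).
  have := congr1 (fun t => `|t|) E2'; rewrite /= normrN !normrM.
  rewrite (ger0_norm (_ : 0 <= P)); last by clear -hxy1; lra.
  rewrite (ger0_norm (_ : 0 <= 2)) // (ger0_norm (_ : 0 <= x * u + (1 - x))) //.
  clear -Q0 x2; lra.
have N1 : P * `|v| <= 2601/10000 * (426/100 * ay).
  by apply: ler_pM => //; clear -hxy1; lra.
have N2 : 2 * ay * (49/100 * (9/10) + 49/100) <= 2 * ay * (x * u + (1 - x)).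
  apply: ler_wpM2l; first by clear -ay0; lra.
  clear -Q0 x2; lra.
clear -N N1 N2 ay0; lra.
Qed.

Lemma sq_nc z : nc z * nc z = complex.Re z ^+ 2 + complex.Im z ^+ 2.
Proof. by rewrite -expr2 sqr_sqrtr // addr_ge0 // sqr_ge0. Qed.

Lemma nc_le z (c : R) : 0 <= c -> complex.Re z ^+ 2 + complex.Im z ^+ 2 <= c ^+ 2 ->
  nc z <= c.
Proof.
move=> c0 h; rewrite /nc -(ger0_norm c0) -sqrtr_sqr.
by rewrite ler_sqrt // sqr_ge0.
Qed.

Lemma key_real (x : R) (L : set R[i]) : 0 < x -> x < 1/2 ->
  is_attractor x%:C L -> ~ connected L.
Proof.
move=> x0 xl hL conL.
have [m [m0 [hm hmb]]] := bound_m _ _ hL.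
have [a [b [La [Lb eab]]]] := conn_inter _ _ hL conL.
have hab : nc (a - b) <= 2 * m.
  have -> : a - b = (a - 1/2) + (- (b - 1/2)) by ring.
  apply: le_trans (ncD _ _) _; rewrite ncN.
  have := hm a La; have := hm b Lb; lra.
have e1 : (1 - x%:C : R[i]) = (1 - x)%:C by rewrite rmorphB rmorph1.
rewrite e1 ncR ncR (gtr0_norm x0) (gtr0_norm (_ : 0 < 1 - x)) in hmb; last lra.
have hm2 : (1 - x) * m <= (1 - x) * (1/2) by lra.
rewrite ler_pM2l in hm2; last lra.
have E : x%:C * (a - b) = (1 - x)%:C by rewrite -e1 mulrBr eab; ring.
have := congr1 nc E; rewrite ncM !ncR (gtr0_norm x0) (gtr0_norm (_ : 0 < 1 - x)); last lra.
move=> E'.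
have : x * nc (a - b) <= x * 1 by apply: ler_wpM2l; lra.
lra.
Qed.

Lemma key_cplx (x y : R) (L : set R[i]) :
  `|x - 1/2| < 1/100 -> `|y| < 1/100 -> y != 0 ->
  is_attractor (x +i* y) L -> ~ connected L.
Proof.
move=> hx hy yn0 hL conL.
set z := x +i* y.
have [x1 x2] : 49/100 < x /\ x < 51/100.
  by move: hx; rewrite ltr_norml => /andP[]; split; lra.
have [y1 y2] : -1/100 < y /\ y < 1/100.
  by move: hy; rewrite ltr_norml => /andP[]; split; lra.
have [m [m0 [hm hmb]]] := bound_m _ _ hL.
have hd : forall p q, L p -> L q -> nc (p - q) <= 2 * m.
  move=> p q Lp Lq; have -> : p - q = (p - 1/2) + (- (q - 1/2)) by ring.
  apply: le_trans (ncD _ _) _; rewrite ncN.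
  have := hm p Lp; have := hm q Lq; lra.
have yy : y * y <= 1/10000.
  have : `|y| * `|y| <= 1/100 * (1/100) by apply: ler_pM; [|exact: normr_ge0| exact: ltW|exact: ltW].
  rewrite -normrM ger0_norm; [clear; lra | by rewrite -expr2 sqr_ge0].
have xx1 : x * x <= 51/100 * (51/100).
  by apply: ler_pM; [clear -x1; lra|clear -x1; lra|exact: ltW x2|exact: ltW x2].
have xx2 : 49/100 * (49/100) <= x * x.
  by apply: ler_pM; [clear; lra|clear; lra|exact: ltW x1|exact: ltW x1].
have ox : (1 - x) * (1 - x) <= 51/100 * (51/100).
  by apply: ler_pM; [clear -x2; lra|clear -x2; lra|clear -x1; lra|clear -x1; lra].
have nz : nc z <= 13/25.
  apply: nc_le; first by clear; lra.
  rewrite /= !expr2; clear -xx1 yy; lra.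
have n1 : nc (1 - z) <= 13/25.
  apply: nc_le; first by clear; lra.
  rewrite /= !expr2.
  have -> : (1 + - x) * (1 + - x) = (1 - x) * (1 - x) by [].
  have -> : (0 + - y) * (0 + - y) = y * y by ring.
  clear -ox yy; lra.
have mb : m <= 13/24.
  have : nc z * m <= 13/25 * m by apply: ler_wpM2r.
  clear -hmb n1; lra.
have [a [b [La [Lb eab]]]] := conn_inter _ _ hL conL.
have zz : nc (z * z) = x * x + y * y.
  by rewrite ncM sq_nc /= !expr2.
have small : forall d w, nc d <= 2 * m -> 49/100 <= complex.Re w ->
    z * z * d = w -> False.
  move=> d w hdm hw E.
  have := congr1 nc E; rewrite ncM zz => E'.
  have h1 := le_trans hw (le_trans (ler_norm _) (Re_le_nc w)).
  have : (x * x + y * y) * nc d <= (x * x + y * y) * (13/12).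
    apply: ler_wpM2l; first by apply: addr_ge0; rewrite -expr2 sqr_ge0.
    clear -hdm mb; lra.
  clear -E' h1 xx1 yy; lra.
have [a' [La' [ea|ea]]] := L_decomp _ _ _ hL La;
have [b' [Lb' [eb|eb]]] := L_decomp _ _ _ hL Lb; rewrite ea eb -/z in eab.
- apply: (small (a' - b') (1 - z)); first exact: hd.
    by rewrite /=; clear -x2; lra.
  have -> : z * z * (a' - b') = z * (z * a') - z * (z * b' - 1) - z by ring.
  by rewrite eab; ring.
- apply: (small (a' - b') (1 - z * z)); first exact: hd.
    rewrite /=; have := sqr_ge0 y; rewrite expr2; clear -xx1; lra.
  have -> : z * z * (a' - b') = z * (z * a') - z * (z * (b' - 1) + 1 - 1) - z * z by ring.
  by rewrite eab; ring.
- have [M [M0 [hM hMb]]] := bound_M _ _ _ hL hm.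
  have E : z * z * (a' - b') = (1 - z) * (1 - z).
    have -> : z * z * (a' - b') = z * (z * (a' - 1) + 1) + z * z - 2 * z - z * (z * b' - 1) by ring.
    by rewrite eab; ring.
  have hv : `|complex.Im (a' - b')| <= 2 * M.
    rewrite ImB; apply: le_trans (ler_normB _ _) _.
    have := hM a' La'; have := hM b' Lb'; clear; lra.
  have E1 := congr1 (@complex.Re R) E; have E2 := congr1 (@complex.Im R) E.
  rewrite /= in hMb.
  rewrite !ReM !ImM /= in E1 E2.
  apply: (@arith_gf x y (complex.Re (a' - b')) (complex.Im (a' - b')) m M hx hy yn0 m0 mb M0 hMb hv).
    by move: E1; rewrite !expr2 => h; clear -h; lra.
  by move: E2; rewrite !expr2 => h; clear -h; lra.
- apply: (small (a' - b') (1 - z)); first exact: hd.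
    by rewrite /=; clear -x2; lra.
  have -> : z * z * (a' - b') = z * (z * (a' - 1) + 1) - z * (z * (b' - 1) + 1 - 1) - z by ring.
  by rewrite eab; ring.
Qed.

End S.

Theorem lemma10p1p1 (R : realType) :
  exists alpha : R, 1/2 < alpha /\
  exists U : set R[i], open U /\
    @Mset R `&` U = [set z : R[i] | exists x : R, 1/2 <= x < alpha /\ z = (x%:C)%C].
Proof.
exists (1/2 + 1/100); split; first lra.
exists (ball (1/2 : R[i]) (1/100 : R)%:C%C); split.
  by apply: ball_open; rewrite ltcR; lra.
apply/seteqP; split => z.
- move=> [[_ [L [hL conL]]] hU].
  move: hU; rewrite ballC normC_nc ltcR => hU.
  case: z hL conL hU => x y hL conL hU.
  have hx : `|x - 1/2| < 1/100.
    apply: le_lt_trans hU; rewrite -normrN opprB.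
    by have := @Re_le_nc R (1/2 - (x +i* y)%C); rewrite halfC ReB.
  have hy : `|y| < 1/100.
    apply: le_lt_trans hU.
    by have := @Im_le_nc R (1/2 - (x +i* y)%C); rewrite halfC ImB /= sub0r normrN.
  have [y0|yn0] := eqVneq y 0; last first.
    by exfalso; exact: (@key_cplx R x y L hx hy yn0 hL conL).
  subst y.
  have [xl|xg] := ltP x (1/2).
    exfalso; apply: (@key_real R x L _ xl hL conL).
    by move: hx; rewrite ltr_norml => /andP[]; lra.
  exists x; split => //; apply/andP; split => //.
  by move: hx; rewrite ltr_norml => /andP[]; lra.
- move=> [x [/andP[x1 x2] ->]]; split.
    by apply: real_in_M; apply/andP; split => //; lra.
  rewrite ballC normC_nc ltcR halfC -rmorphB ncR.
  rewrite ltr_norml; apply/andP; split; lra.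
Qed.
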